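(* Let $\alpha$ be a Heron angle with $0\le\alpha<\pi/2$, and let $\lambda\ge0$ be a rational number such that $\tan\alpha=\lambda^2$. Then $\alpha=0$.
   Context: An angle $\theta$ is called a Heron angle if both $\sin\theta$ and $\cos\theta$ are rational numbers. *)

(* Defs.v *)
From Stdlib Require Import Reals QArith Qreals.
Open Scope R_scope.

Definition is_rational (x : R) : Prop := exists q : Q, x = Q2R q.

Definition heron_angle (theta : R) : Prop :=
  is_rational (sin theta) /\ is_rational (cos theta).

(* Main.v *)
Require Import Defs.
From Stdlib Require Import Reals QArith Qreals ZArith Znumtheory Lia Lra.
Open Scope Z_scope.

Lemma L_gcd1 a b : (forall g, (g|a) -> (g|b) -> (g|1)) -> Z.gcd a b = 1.
Proof. intros H. pose proof (H _ (Z.gcd_divide_l a b) (Z.gcd_divide_r a b)) as H1.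
  apply Z.divide_1_r in H1. pose proof (Z.gcd_nonneg a b). lia. Qed.

Lemma L_div1 g a b : Z.gcd a b = 1 -> (g|a) -> (g|b) -> (g|1).
Proof. intros H ? ?. rewrite <- H. apply Z.gcd_greatest; auto. Qed.

Lemma L_relp_sq a b : Z.gcd a b = 1 -> Z.gcd (a*a) (b*b) = 1.
Proof. rewrite !Zgcd_1_rel_prime. intros. apply rel_prime_mult; apply rel_prime_sym;
  apply rel_prime_mult; apply rel_prime_sym; auto. Qed.

Lemma L_dvd_coprime g a b : (g | a) -> Z.gcd a b = 1 -> (g | b*b) -> (g | 1).
Proof. intros Hga Hab Hgb. apply Zgcd_1_rel_prime in Hab.
  assert (rel_prime g b) by (eapply rel_prime_div; eauto).
  assert (rel_prime g (b*b)) by (apply rel_prime_mult; auto).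
  apply (Gauss g (b*b) 1); auto. rewrite Z.mul_1_r; auto. Qed.

Lemma L_sq a b c : 0 <= a -> 0 <= b -> Z.gcd a b = 1 -> a*b = c*c -> exists d, 0 <= d /\ a = d*d.
Proof.
  intros Ha Hb Hab Habc. set (g := Z.gcd a c).
  assert (Hg0 : 0 <= g) by apply Z.gcd_nonneg.
  destruct (Z.eq_dec g 0) as [E|E].
  { exists 0. split. lia. apply Z.gcd_eq_0_l in E. lia. }
  destruct (Z.gcd_divide_l a c) as [k Hk]. destruct (Z.gcd_divide_r a c) as [l Hl].
  fold g in Hk, Hl.
  assert (Hkl : Z.gcd k l = 1).
  { pose proof (Z.gcd_div_gcd a c g E eq_refl) as H.
    rewrite Hk, Hl, !Z.div_mul in H by auto. exact H. }
  assert (H1 : Z.gcd (a*a) (c*c) = a).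
  { rewrite <- Habc, Z.gcd_mul_mono_l, Hab. lia. }
  assert (H2 : Z.gcd (a*a) (c*c) = g*g).
  { replace (a*a) with ((g*g)*(k*k)) by (rewrite Hk; ring).
    replace (c*c) with ((g*g)*(l*l)) by (rewrite Hl; ring).
    rewrite Z.gcd_mul_mono_l, L_relp_sq by auto. rewrite Z.abs_eq. ring. apply Z.mul_nonneg_nonneg; auto. }
  exists g. split; auto. congruence.
Qed.

Lemma odd_sq x : Z.Odd x -> exists t, x*x = 4*t+1.
Proof. intros [k ->]. exists (k*k+k). ring. Qed.
Lemma even_sq x : Z.Even x -> exists t, x*x = 4*t.
Proof. intros [k ->]. exists (k*k). ring. Qed.
Lemma sq_mod4 x : exists t, x*x = 4*t \/ x*x = 4*t+1.
Proof. destruct (Z.Even_or_Odd x) as [H|H].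
  - destruct (even_sq _ H) as [t Ht]; eauto.
  - destruct (odd_sq _ H) as [t Ht]; eauto. Qed.

Lemma sq_inj a b : 0 <= a -> 0 <= b -> a*a = b*b -> a = b.
Proof. intros Ha Hb H. destruct (Z.lt_total a b) as [L|[L|L]]; auto.
  - pose proof (Z.square_lt_mono_nonneg a b Ha L). lia.
  - pose proof (Z.square_lt_mono_nonneg b a Hb L). lia. Qed.

Lemma pyth X Y Zz : 0 < X -> 0 < Y -> 0 < Zz -> Z.gcd X Y = 1 -> Z.Odd X -> Z.Even Y ->
  X*X + Y*Y = Zz*Zz ->
  exists m n, 0 < m /\ 0 < n /\ Z.gcd m n = 1 /\ X = m*m - n*n /\ Y = 2*m*n /\ Zz = m*m + n*n.
Proof.
  intros HX HY HZ Hg HoX HeY Heq.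
  destruct (Z.Even_or_Odd Zz) as [HeZ|HoZ].
  { exfalso. destruct (even_sq _ HeZ) as [t1 ?]. destruct (odd_sq _ HoX) as [t2 ?].
    destruct (even_sq _ HeY) as [t3 ?]. lia. }
  destruct HoZ as [c Hc]. destruct HoX as [k Hk]. destruct HeY as [y' Hy].
  set (A := c - k). set (B := c + k + 1).
  assert (HZX : X < Zz).
  { destruct (Z.lt_ge_cases X Zz); auto.
    assert (Zz*Zz <= X*X) by (apply Z.mul_le_mono_nonneg; lia).
    assert (0 < Y*Y) by (apply Z.mul_pos_pos; lia). lia. }
  assert (HA : 0 < A) by (unfold A; lia).
  assert (HB : 0 < B) by (unfold B; lia).
  assert (HAB : y'*y' = A*B).
  { apply (Z.mul_reg_l _ _ 4); [lia|].
    replace (4*(y'*y')) with (Y*Y) by (subst; ring).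
    replace (4*(A*B)) with (Zz*Zz - X*X) by (unfold A, B; subst; ring). lia. }
  assert (HgAB : Z.gcd A B = 1).
  { apply L_gcd1. intros g ga gb.
    assert (gX : (g | X)) by (replace X with (B - A) by (unfold A, B; lia); apply Z.divide_sub_r; auto).
    assert (gZ : (g | Zz)) by (replace Zz with (A + B) by (unfold A, B; lia); apply Z.divide_add_r; auto).
    apply (L_dvd_coprime g X Y); auto.
    replace (Y*Y) with (Zz*Zz - X*X) by lia. apply Z.divide_sub_r; apply Z.divide_mul_l; auto. }
  destruct (L_sq A B y') as [n [Hn HAn]]; try lia; auto.
  destruct (L_sq B A y') as [m [Hm HBm]]; try lia; auto. rewrite Z.gcd_comm; auto.
  exists m, n.
  assert (0 < n) by (destruct (Z.eq_dec n 0); subst; lia).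
  assert (0 < m) by (destruct (Z.eq_dec m 0); subst; lia).
  split; [lia|]. split; [lia|]. split.
  { apply L_gcd1. intros g gm gn. apply (L_div1 g A B); auto.
    rewrite HAn. apply Z.divide_mul_l; auto. rewrite HBm. apply Z.divide_mul_l; auto. }
  assert (y' = m*n).
  { apply sq_inj; [lia| apply Z.mul_nonneg_nonneg; lia|]. rewrite HAB, HAn, HBm; ring. }
  split; [|split]; unfold A, B in *; lia.
Qed.

Lemma sqdiv a b : 0 < a -> (a*a | b*b) -> (a | b).
Proof.
  intros Ha H. set (g := Z.gcd a b).
  assert (Hg : 0 < g).
  { assert (0 <= g) by apply Z.gcd_nonneg. destruct (Z.eq_dec g 0) as [E|E].
    - apply Z.gcd_eq_0_l in E. lia.
    - lia. }
  destruct (Z.gcd_divide_l a b) as [k Hk]. destruct (Z.gcd_divide_r a b) as [l Hl].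
  fold g in Hk, Hl.
  assert (Hkl : Z.gcd k l = 1).
  { pose proof (Z.gcd_div_gcd a b g ltac:(lia) eq_refl) as H'.
    rewrite Hk, Hl, !Z.div_mul in H' by lia. exact H'. }
  assert (Hk0 : 0 < k) by (apply (Z.mul_pos_cancel_r k g); lia).
  assert (Hkk : (k*k | l*l)).
  { assert (Hgg : g*g <> 0) by (assert (0<g*g) by (apply Z.mul_pos_pos; lia); lia).
    apply (proj1 (Z.mul_divide_cancel_l (k*k) (l*l) (g*g) Hgg)).
    replace (g*g*(k*k)) with (a*a) by (rewrite Hk; ring).
    replace (g*g*(l*l)) with (b*b) by (rewrite Hl; ring). auto. }
  assert (Hk1 : (k*k | 1)).
  { rewrite <- (L_relp_sq k l Hkl). apply Z.gcd_greatest; auto. apply Z.divide_refl. }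
  apply Z.divide_1_r in Hk1.
  assert (k = 1).
  { assert (k*k = 1) by (destruct Hk1; [lia|]; pose proof (Z.nlt_square_0 k); lia).
    apply sq_inj; lia. }
  subst k. rewrite Hk, Z.mul_1_l. exists l. auto.
Qed.

Lemma step x y z : 0<x -> 0<y -> 0<z -> Z.gcd x y = 1 -> Z.Odd x -> Z.Even y ->
  x*x*x*x + y*y*y*y = z*z ->
  exists u v w, 0<u /\ 0<v /\ 0<w /\ w < z /\ u*u*u*u + v*v*v*v = w*w.
Proof.
  intros Hx Hy Hz Hxy Hox Hey Heq.
  destruct (pyth (x*x) (y*y) z) as [m [n [Hm [Hn [Hmn [Hx2 [Hy2 Hz2]]]]]]].
  - apply Z.mul_pos_pos; lia.
  - apply Z.mul_pos_pos; lia.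
  - lia.
  - apply L_relp_sq; auto.
  - destruct Hox as [k ->]. exists (2*k*k+2*k). ring.
  - destruct Hey as [k ->]. exists (2*k*k). ring.
  - rewrite <- Heq. ring.
  - destruct (Z.Even_or_Odd n) as [Hne|Hno].
    2:{ exfalso. destruct (odd_sq _ Hox) as [t1 ?]. destruct (odd_sq _ Hno) as [t2 ?].
        destruct (sq_mod4 m) as [t3 [?|?]]; lia. }
    assert (Hxn : Z.gcd x n = 1).
    { apply L_gcd1. intros g gx gn. apply (L_dvd_coprime g n m); auto.
      rewrite Z.gcd_comm; auto.
      replace (m*m) with (x*x + n*n) by lia. apply Z.divide_add_r; apply Z.divide_mul_l; auto. }
    destruct (pyth x n m) as [a [b [Ha [Hb [Hab [Hxa [Hnb Hma]]]]]]]; auto.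
    { lia. }
    destruct (Z.Even_or_Odd y) as [[y1 Hy1]|Hyo].
    2:{ exfalso. destruct (odd_sq _ Hyo) as [t ?]. lia. }
    assert (Hy1s : y1*y1 = a*(b*m)).
    { apply (Z.mul_reg_l _ _ 4); [lia|].
      replace (4*(y1*y1)) with (y*y) by (subst y; ring). rewrite Hy2, Hnb; ring. }
    assert (Ham : Z.gcd a m = 1).
    { apply L_gcd1. intros g ga gm. apply (L_dvd_coprime g a b); auto.
      replace (b*b) with (m - a*a) by lia. apply Z.divide_sub_r; auto. apply Z.divide_mul_l; auto. }
    assert (Hbm : Z.gcd b m = 1).
    { apply L_gcd1. intros g gb gm. apply (L_dvd_coprime g b a); auto.
      rewrite Z.gcd_comm; auto.
      replace (a*a) with (m - b*b) by lia. apply Z.divide_sub_r; auto. apply Z.divide_mul_l; auto. }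
    assert (Hmab : Z.gcd m (a*b) = 1).
    { apply Zgcd_1_rel_prime. apply rel_prime_sym.
      apply (rel_prime_div n m (a*b)).
      - apply Zgcd_1_rel_prime. rewrite Z.gcd_comm; auto.
      - exists 2. lia. }
    destruct (L_sq a (b*m) y1) as [u [Hu Hau]].
    { lia. } { apply Z.mul_nonneg_nonneg; lia. }
    { apply Zgcd_1_rel_prime. apply rel_prime_mult; apply Zgcd_1_rel_prime; auto. }
    { auto. }
    destruct (L_sq b (a*m) y1) as [v [Hv Hbv]].
    { lia. } { apply Z.mul_nonneg_nonneg; lia. }
    { apply Zgcd_1_rel_prime. apply rel_prime_mult; apply Zgcd_1_rel_prime; auto.
      rewrite Z.gcd_comm; auto. }
    { rewrite Hy1s. ring. }
    destruct (L_sq m (a*b) y1) as [w [Hw Hmw]].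
    { lia. } { apply Z.mul_nonneg_nonneg; lia. }
    { auto. }
    { rewrite Hy1s. ring. }
    assert (0 < u) by (destruct (Z.eq_dec u 0); subst; lia).
    assert (0 < v) by (destruct (Z.eq_dec v 0); subst; lia).
    assert (0 < w) by (destruct (Z.eq_dec w 0); subst; lia).
    exists u, v, w. split; [lia|]. split; [lia|]. split; [lia|]. split.
    + assert (1*w <= w*w) by (apply Z.mul_le_mono_nonneg; lia).
      assert (1*m <= m*m) by (apply Z.mul_le_mono_nonneg; lia).
      assert (0 < n*n) by (apply Z.mul_pos_pos; lia). lia.
    + replace (u*u*u*u) with (a*a) by (rewrite Hau; ring).
      replace (v*v*v*v) with (b*b) by (rewrite Hbv; ring). lia.
Qed.

Lemma descent n : forall x y z, 0<x -> 0<y -> 0<z -> (Z.to_nat z <= n)%nat ->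
  x*x*x*x + y*y*y*y = z*z -> False.
Proof.
  induction n as [|n IH]; intros x y z Hx Hy Hz Hn Heq.
  - lia.
  - set (d := Z.gcd x y).
    assert (Hd : 0 < d).
    { assert (0 <= d) by apply Z.gcd_nonneg. destruct (Z.eq_dec d 0) as [E|E].
      - apply Z.gcd_eq_0_l in E. lia.
      - lia. }
    destruct (Z.eq_dec d 1) as [E|E].
    + destruct (Z.Even_or_Odd x) as [Hex|Hox]; destruct (Z.Even_or_Odd y) as [Hey|Hoy].
      * destruct Hex as [k Hk]. destruct Hey as [l Hl].
        assert (H2 : (2 | d)) by (apply Z.gcd_greatest; [exists k | exists l]; lia).
        rewrite E in H2. apply Z.divide_1_r in H2. lia.
      * destruct (step y x z) as [u [v [w [Hu [Hv [Hw [Hwz Hs]]]]]]]; auto.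
        rewrite Z.gcd_comm; auto. lia.
        apply (IH u v w); auto; lia.
      * destruct (step x y z) as [u [v [w [Hu [Hv [Hw [Hwz Hs]]]]]]]; auto.
        apply (IH u v w); auto; lia.
      * destruct (odd_sq _ Hox) as [t1 H1]. destruct (odd_sq _ Hoy) as [t2 H2].
        assert (x*x*x*x = 4*(4*t1*t1+2*t1)+1) by
          (replace (x*x*x*x) with ((x*x)*(x*x)) by ring; rewrite H1; ring).
        assert (y*y*y*y = 4*(4*t2*t2+2*t2)+1) by
          (replace (y*y*y*y) with ((y*y)*(y*y)) by ring; rewrite H2; ring).
        destruct (sq_mod4 z) as [t3 [?|?]]; lia.
    + destruct (Z.gcd_divide_l x y) as [x' Hx']. destruct (Z.gcd_divide_r x y) as [y' Hy'].
      fold d in Hx', Hy'.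
      assert (0 < x') by (apply (Z.mul_pos_cancel_r x' d); lia).
      assert (0 < y') by (apply (Z.mul_pos_cancel_r y' d); lia).
      assert (Hdz : (d*d | z)).
      { apply sqdiv. apply Z.mul_pos_pos; lia.
        exists (x'*x'*x'*x' + y'*y'*y'*y'). rewrite <- Heq, Hx', Hy'. ring. }
      destruct Hdz as [z' Hz'].
      assert (0 < z') by (apply (Z.mul_pos_cancel_r z' (d*d)); [apply Z.mul_pos_pos|]; lia).
      assert (4 <= d*d) by (replace 4 with (2*2) by ring; apply Z.mul_le_mono_nonneg; lia).
      assert (z'*4 <= z'*(d*d)) by (apply Z.mul_le_mono_nonneg_l; lia).
      apply (IH x' y' z'); auto; try lia.
      apply (Z.mul_reg_l _ _ ((d*d)*(d*d))). 
      { assert (0 < (d*d)*(d*d)) by (apply Z.mul_pos_pos; lia). lia. }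
      transitivity (z*z). rewrite <- Heq, Hx', Hy'. ring. rewrite Hz'. ring.
Qed.

Lemma fermat4 x y z : x*x*x*x + y*y*y*y = z*z -> x = 0 \/ y = 0.
Proof.
  intros H. destruct (Z.eq_dec x 0); auto. destruct (Z.eq_dec y 0); auto. exfalso.
  assert (Ea : forall a, Z.abs a * Z.abs a = a * a).
  { intros a. destruct (Z.abs_spec a) as [[_ ->]|[_ ->]]; ring. }
  assert (Hz : z <> 0).
  { intros ->. assert (0 < x*x) by (apply Z.mul_pos_pos; lia).
    assert (0 < y*y) by (apply Z.mul_pos_pos; lia). 
    assert (0 < x*x*(x*x)) by (apply Z.mul_pos_pos; lia).
    assert (0 < y*y*(y*y)) by (apply Z.mul_pos_pos; lia). lia. }
  apply (descent (Z.to_nat (Z.abs z)) (Z.abs x) (Z.abs y) (Z.abs z)); try lia.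
Qed.

Open Scope R_scope.

Theorem lemma2 (alpha : R) (lambda : Q) :
  heron_angle alpha ->
  0 <= alpha < PI / 2 ->
  0 <= Q2R lambda ->
  tan alpha = (Q2R lambda) ^ 2 ->
  alpha = 0.
Proof.
  intros [_ [qc Hqc]] [Ha1 Ha2] Hl Ht.
  assert (Hc : 0 < cos alpha) by (apply cos_gt_0; lra).
  set (L := Q2R lambda) in *. set (C := cos alpha) in *.
  assert (HS : sin alpha = L^2 * C).
  { unfold tan in Ht. fold C in Ht. rewrite <- Ht. field. lra. }
  assert (Hpy : L^4 * C^2 + C^2 = 1).
  { pose proof (sin2_cos2 alpha) as H. fold C in H. rewrite HS in H. unfold Rsqr in H.
    rewrite <- H. ring. }
  set (p := Qnum lambda). set (q := Z.pos (Qden lambda)).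
  set (r := Qnum qc). set (s := Z.pos (Qden qc)).
  assert (HL : L = IZR p / IZR q) by reflexivity.
  assert (HC : C = IZR r / IZR s) by (rewrite Hqc; reflexivity).
  assert (Hq : IZR q <> 0) by (apply not_0_IZR; discriminate).
  assert (Hs : IZR s <> 0) by (apply not_0_IZR; discriminate).
  assert (Hr : r <> 0%Z).
  { intros E. rewrite HC, E in Hc. unfold Rdiv in Hc. rewrite Rmult_0_l in Hc. lra. }
  assert (HZ : ((p*r)*(p*r)*(p*r)*(p*r) + (q*r)*(q*r)*(q*r)*(q*r) = (r*s*(q*q))*(r*s*(q*q)))%Z).
  { apply eq_IZR. rewrite !plus_IZR, !mult_IZR.
    replace (IZR p) with (L * IZR q) by (rewrite HL; field; auto).
    replace (IZR r) with (C * IZR s) by (rewrite HC; field; auto).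
    transitivity (C^2*IZR s^4*IZR q^4*(L^4*C^2 + C^2)). ring.
    rewrite Hpy. ring. }
  apply fermat4 in HZ. destruct HZ as [HZ|HZ].
  2:{ exfalso. apply Z.mul_eq_0 in HZ. destruct HZ as [HZ|HZ]; [discriminate|auto]. }
  apply Z.mul_eq_0 in HZ. destruct HZ as [HZ|HZ]; [|contradiction].
  assert (L = 0) by (rewrite HL, HZ; unfold Rdiv; ring).
  assert (sin alpha = 0) by (rewrite HS, H; ring).
  destruct Ha1 as [Ha1|Ha1]; auto.
  exfalso. assert (0 < sin alpha) by (apply sin_gt_0; lra). lra.
Qed.
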